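(* Let $A_0$, $\theta$ and $\gamma$ be as follows: - $A_0$ is feasible for (GDSP) with $\mathrm{assoc}_S(A_0)>0$; - $\theta$ is the minimum of $\mathrm{pen}(A)$ over nonempty infeasible $A\subseteq V'$; - $\gamma>\dfrac{\mathrm{vol}_d(V)}{\theta}\cdot\dfrac{\mathrm{vol}_g(A_0)+\nu_S}{\mathrm{assoc}_S(A_0)}$. Then the continuous problem $$\min_{f\in\mathbb{R}^m_+\setminus\{0\}}\frac{\mathrm{vol}_g^L(f)+\nu_S\,\mathrm{unit}^L(f)+\gamma\,\mathrm{pen}^L(f)}{\mathrm{assoc}_S^L(f)}$$ (with $x/0=+\infty$ for $x>0$) attains its minimum, and this minimum equals the reciprocal of the optimal value of (GDSP). Moreover, for any minimizer $f^*$, the set among $\{j\in V':f^*_j\ge f^*_i\}$, $i=1,\dots,m$, minimizing $$\frac{\mathrm{vol}_g(A)+\nu_S\,\mathrm{unit}(A)+\gamma\,\mathrm{pen}(A)}{\mathrm{assoc}_S(A)}$$ is an optimal solution of (GDSP).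
   Context: Let $V$ be a finite vertex set with symmetric nonnegative weights $w_{ij}=w_{ji}\ge0$ and $w_{ii}=0$. - $d_i=\sum_{j\in V}w_{ij}$, and $\mathrm{vol}_h(A)=\sum_{i\in A}h_i$. - $\mathrm{assoc}(A)=\sum_{i,j\in A}w_{ij}$ (ordered pairs), and $\mathrm{cut}(A,B)=\sum_{i\in A,j\in B}w_{ij}$. - Fix $S\subseteq V$, $V'=V\setminus S$, $m=|V'|$ (identify $V'$ with $\{1,\dots,m\}$), and $d^S_i=\sum_{j\in S}w_{ij}$. - $g:V\to(0,\infty)$, $\mu_S=\mathrm{assoc}(S)$, $\nu_S=\mathrm{vol}_g(S)$. - $\mathrm{unit}(A)=1$ if $A\ne\emptyset$ and $0$ otherwise. - $\mathrm{assoc}_S(A)=\mathrm{vol}_d(A)-\mathrm{cut}(A,V'\setminus A)+\mathrm{vol}_{d^S}(A)+\mu_S\,\mathrm{unit}(A)$ for $A\subseteq V'$. Constraint data: $M_1,\dots,M_p\in[0,\infty)^V$; reals $k_j,l_j$; a symmetric $\mathrm{dist}\ge0$ with $\mathrm{dist}(u,u)=0$; and $d_0\ge0$. - $A\subseteq V'$ is feasible for (GDSP) if $A\ne\emptyset$, $k_j\le\mathrm{vol}_{M_j}(A)\le l_j$ for all $j$, and $\mathrm{dist}(u,v)\le d_0$ for all $u,v\in A$. - (GDSP) maximizes $\mathrm{assoc}_S(A)/(\mathrm{vol}_g(A)+\nu_S)$ over feasible $A$. Penalty: $\mathrm{pen}(\emptyset)=0$, and for $A\ne\emptyset$, $$\mathrm{pen}(A)=\sum_{j}\max\{0,\mathrm{vol}_{M_j}(A)-l_j\}+\sum_j\max\{0,k_j-\mathrm{vol}_{M_j}(A)\}+\sum_{u,v\in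 A}\max\{0,\mathrm{dist}(u,v)-d_0\}.$$ Lovasz extension of $F:2^{V'}\to\mathbb{R}$ with $F(\emptyset)=0$: for $f\in\mathbb{R}^m$ and a permutation $\pi$ with $f_{\pi(1)}\le\dots\le f_{\pi(m)}$, $B_i=\{\pi(i),\dots,\pi(m)\}$, $$F^L(f)=\sum_{i=1}^{m-1}F(B_{i+1})(f_{\pi(i+1)}-f_{\pi(i)})+F(V')f_{\pi(1)}.$$ *)

(* Defs.v *)
From HB Require Import structures.
From mathcomp Require Import all_boot all_order all_algebra.
Unset Printing Implicit Defensive.
Import Order.TTheory GRing.Theory Num.Theory.
Local Open Scope ring_scope.

Definition degree {R : realFieldType} {V : finType} (w : V -> V -> R) (i : V) : R :=
  \sum_(j : V) w i j.
Definition vol {R : realFieldType} {V : finType} (h : V -> R) (A : {set V}) : R :=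
  \sum_(i in A) h i.
Definition assoc {R : realFieldType} {V : finType} (w : V -> V -> R) (A : {set V}) : R :=
  \sum_(i in A) \sum_(j in A) w i j.
Definition cut {R : realFieldType} {V : finType} (w : V -> V -> R) (A B : {set V}) : R :=
  \sum_(i in A) \sum_(j in B) w i j.
Definition degS {R : realFieldType} {V : finType} (w : V -> V -> R) (S : {set V}) (i : V) : R :=
  \sum_(j in S) w i j.
Definition unit_set {R : realFieldType} {T : finType} (A : {set T}) : R :=
  if A == set0 then 0 else 1.

Definition Vp {V : finType} (S : {set V}) : finType := {x : V | x \in ~: S}.
Definition emb {V : finType} {S : {set V}} (A : {set Vp S}) : {set V} :=
  [set val x | x in A].

Definition assocS {R : realFieldType} {V : finType} (w : V -> V -> R) (S : {set V})
  (A : {set Vp S}) : R :=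
  vol (degree w) (emb A) - cut w (emb A) ((~: S) :\: emb A)
  + vol (degS w S) (emb A) + assoc w S * unit_set A.

Definition feasible {R : realFieldType} {V : finType} {p : nat}
  (M : 'I_p -> V -> R) (k l : 'I_p -> R) (dist : V -> V -> R) (d0 : R)
  (S : {set V}) (A : {set Vp S}) : Prop :=
  [/\ A != set0,
      (forall j, k j <= vol (M j) (emb A) <= l j) &
      (forall u v, u \in A -> v \in A -> dist (val u) (val v) <= d0)].

Definition pen {R : realFieldType} {V : finType} {p : nat}
  (M : 'I_p -> V -> R) (k l : 'I_p -> R) (dist : V -> V -> R) (d0 : R)
  (S : {set V}) (A : {set Vp S}) : R :=
  if A == set0 then 0 else
    \sum_(j < p) Num.max 0 (vol (M j) (emb A) - l j)
  + \sum_(j < p) Num.max 0 (k j - vol (M j) (emb A))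
  + \sum_(u in A) \sum_(v in A) Num.max 0 (dist (val u) (val v) - d0).

(* GDSP objective assoc_S(A) / (vol_g(A) + nu_S) *)
Definition gdsp_ratio {R : realFieldType} {V : finType} (w : V -> V -> R) (g : V -> R)
  (S : {set V}) (A : {set Vp S}) : R :=
  assocS w S A / (vol g (emb A) + vol g S).

Definition gdsp_optimal {R : realFieldType} {V : finType} {p : nat}
  (w : V -> V -> R) (g : V -> R) (M : 'I_p -> V -> R) (k l : 'I_p -> R)
  (dist : V -> V -> R) (d0 : R) (S : {set V}) (A : {set Vp S}) : Prop :=
  feasible M k l dist d0 S A /\
  forall B, feasible M k l dist d0 S B -> gdsp_ratio w g S B <= gdsp_ratio w g S A.

(* s is a permutation of T sorted so that f is nondecreasing along s
   (s = [pi(1); ...; pi(m)]); B_{i+1} = [set x in drop i s].  With the convention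
   f_{pi(0)} := 0, F^L(f) = sum_{i=0}^{m-1} F(B_{i+1}) (f_{pi(i+1)} - f_{pi(i)}),
   which is exactly the formula of the paper. *)
Definition lovasz {R : realFieldType} {T : finType} (F : {set T} -> R) (f : T -> R) : R :=
  let s := sort (fun x y => f x <= f y) (enum T) in
  let vals := map f s in
  \sum_(0 <= i < size s)
    F [set x in drop i s] * (nth 0 vals i - (if i is i'.+1 then nth 0 vals i' else 0)).

(* ---------- extended values: None stands for +infinity ---------- *)
Definition ext_le {R : realFieldType} (x y : option R) : bool :=
  match x, y with
  | _, None => true
  | None, Some _ => false
  | Some a, Some b => a <= b
  end.
(* x / 0 := +infinity (the numerators used below are always > 0) *)
Definition xdiv {R : realFieldType} (x y : R) : option R :=
  if y == 0 then None else Some (x / y).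

Definition cont_obj {R : realFieldType} {V : finType} {p : nat}
  (w : V -> V -> R) (g : V -> R) (M : 'I_p -> V -> R) (k l : 'I_p -> R)
  (dist : V -> V -> R) (d0 gamma : R) (S : {set V}) (f : Vp S -> R) : option R :=
  xdiv (lovasz (fun A => vol g (emb A)) f + vol g S * lovasz unit_set f
        + gamma * lovasz (pen M k l dist d0 S) f)
       (lovasz (assocS w S) f).

Definition set_obj {R : realFieldType} {V : finType} {p : nat}
  (w : V -> V -> R) (g : V -> R) (M : 'I_p -> V -> R) (k l : 'I_p -> R)
  (dist : V -> V -> R) (d0 gamma : R) (S : {set V}) (A : {set Vp S}) : option R :=
  xdiv (vol g (emb A) + vol g S * unit_set A + gamma * pen M k l dist d0 S A)
       (assocS w S A).

Definition cont_minimizer {R : realFieldType} {V : finType} {p : nat}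
  (w : V -> V -> R) (g : V -> R) (M : 'I_p -> V -> R) (k l : 'I_p -> R)
  (dist : V -> V -> R) (d0 gamma : R) (S : {set V}) (f : Vp S -> R) : Prop :=
  [/\ (forall i, 0 <= f i), (exists i, f i != 0) &
      forall h : Vp S -> R, (forall i, 0 <= h i) -> (exists i, h i != 0) ->
        ext_le (cont_obj w g M k l dist d0 gamma S f) (cont_obj w g M k l dist d0 gamma S h)].

Definition level_set {T : finType} {R : realFieldType} (f : T -> R) (i : T) : {set T} :=
  [set j | f i <= f j].

(* Main.v *)
Require Import Defs.
From HB Require Import structures.
From mathcomp Require Import all_boot all_order all_algebra.
From mathcomp Require Import ring lra.
Import Order.TTheory GRing.Theory Num.Theory.
Local Open Scope ring_scope.

Definition ss {R : realFieldType} {T : finType} (f : T -> R) : seq T :=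
  sort (fun x y => f x <= f y) (enum T).
Definition vv {R : realFieldType} {T : finType} (f : T -> R) (i : nat) : R :=
  nth 0 (map f (ss f)) i.
Definition Bs {R : realFieldType} {T : finType} (f : T -> R) (i : nat) : {set T} :=
  [set x in drop i (ss f)].
Definition cc {R : realFieldType} {T : finType} (f : T -> R) (i : nat) : R :=
  vv f i - (if i is i'.+1 then vv f i' else 0).

Lemma lovaszE {R : realFieldType} {T : finType} (F : {set T} -> R) (f : T -> R) :
  lovasz F f = \sum_(0 <= i < size (ss f)) F (Bs f i) * cc f i.
Proof. by []. Qed.

Lemma size_ss {R : realFieldType} {T : finType} (f : T -> R) : size (ss f) = #|T|.
Proof. by rewrite /ss size_sort cardE. Qed.

Lemma mem_ss {R : realFieldType} {T : finType} (f : T -> R) x : x \in ss f.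
Proof. by rewrite /ss mem_sort mem_enum. Qed.

Lemma sorted_ss {R : realFieldType} {T : finType} (f : T -> R) : 
  sorted (fun x y => f x <= f y) (ss f).
Proof. apply: sort_sorted => x y; exact: le_total. Qed.

Lemma ss_le {R : realFieldType} {T : finType} (f : T -> R) x0 i j :
  (i <= j)%N -> (j < size (ss f))%N -> f (nth x0 (ss f) i) <= f (nth x0 (ss f) j).
Proof.
move=> hij hj.
have htr : transitive (fun x y : T => f x <= f y).
  move=> x y z; exact: le_trans.
have := @sorted_leq_nth _ (fun x y => f x <= f y) htr (fun x => lexx (f x)) x0 (ss f) (sorted_ss f) i j.
apply => //; rewrite inE /=; exact: leq_ltn_trans hj.
Qed.

Lemma vvE {R : realFieldType} {T : finType} (f : T -> R) x0 i :
  (i < size (ss f))%N -> vv f i = f (nth x0 (ss f) i).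
Proof. by move=> hi; rewrite /vv (nth_map x0). Qed.

Lemma cc_ge0 {R : realFieldType} {T : finType} (f : T -> R) i :
  (forall x, 0 <= f x) -> (i < size (ss f))%N -> 0 <= cc f i.
Proof.
move=> f0 hi; have [x0 _] : exists x0 : T, True.
  by case: (ss f) hi => // x _ _; exists x.
rewrite /cc; case: i hi => [|i] hi.
  by rewrite subr0 (vvE _ x0).
rewrite subr_ge0 (vvE f x0 i) ?(ltnW hi) // (vvE f x0 i.+1) //; apply: ss_le => //.
Qed.

Lemma cc_sum {R : realFieldType} {T : finType} (f : T -> R) m :
  \sum_(0 <= i < m.+1) cc f i = vv f m.
Proof.
elim: m => [|m IH]; first by rewrite big_nat1 /cc subr0.
by rewrite big_nat_recr //= IH /cc addrC subrK.
Qed.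

Lemma vv_max {R : realFieldType} {T : finType} (f : T -> R) x :
  f x <= vv f (size (ss f)).-1.
Proof.
have hx := mem_ss f x.
have hn : (0 < size (ss f))%N by case: (ss f) hx.
have hlt : ((size (ss f)).-1 < size (ss f))%N by rewrite ltn_predL.
rewrite (vvE f x _ hlt).
rewrite -{1}(nth_index x hx); apply: ss_le => //.
by rewrite -ltnS prednK // index_mem.
Qed.

Lemma Bs_level {R : realFieldType} {T : finType} (f : T -> R) x0 i :
  (i < size (ss f))%N -> 0 < cc f i -> Bs f i = level_set f (nth x0 (ss f) i).
Proof.
move=> hi hc; apply/setP => x; rewrite /Bs /level_set !inE.
apply/idP/idP.
- move=> hx; rewrite -(nth_index x0 hx) nth_drop; apply: ss_le.
    exact: leq_addr.
  by rewrite -ltn_subRL -size_drop index_mem.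
- move=> hle; have hx := mem_ss f x.
  case: (leqP i (index x (ss f))) => hix.
    rewrite -(nth_index x0 hx) -(subnKC hix) -nth_drop mem_nth //.
    by rewrite size_drop ltn_sub2r // index_mem.
  exfalso; move: hc; rewrite /cc; case: i hi hix hle => // i hi hix hle.
  rewrite (vvE f x0 i.+1) // (vvE f x0 i) ?(ltnW hi) // subr_gt0.
  have : f x <= f (nth x0 (ss f) i).
    rewrite -{1}(nth_index x0 hx); apply: ss_le => //; exact: ltnW.
  move=> h1 h2; have := le_lt_trans h1 h2; rewrite ltNge hle //.
Qed.

Lemma lovasz_lin {R : realFieldType} {T : finType} (F1 F2 F3 : {set T} -> R) a b (f : T -> R) :
  lovasz F1 f + a * lovasz F2 f + b * lovasz F3 f =
  lovasz (fun A => F1 A + a * F2 A + b * F3 A) f.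
Proof.
rewrite !lovaszE !mulr_sumr -!big_split /=; apply: eq_bigr => i _.
by rewrite !mulrDl !mulrA.
Qed.

Lemma lovasz_ge0 {R : realFieldType} {T : finType} (F : {set T} -> R) (f : T -> R) :
  (forall A, 0 <= F A) -> (forall x, 0 <= f x) -> 0 <= lovasz F f.
Proof.
move=> F0 f0; rewrite lovaszE big_nat; apply: sumr_ge0 => i /andP[_ hi].
by apply: mulr_ge0 => //; apply: cc_ge0.
Qed.

Lemma ratio_lb {R : realFieldType} {T : finType} (N D : {set T} -> R) v (f : T -> R) :
  (forall A, 0 <= N A) -> (forall A, 0 < D A -> v * D A <= N A) ->
  (forall A, 0 <= D A) -> (forall x, 0 <= f x) ->
  v * lovasz D f <= lovasz N f.
Proof.
move=> N0 hND D0 f0; rewrite !lovaszE mulr_sumr !big_nat; apply: ler_sum.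
move=> i /andP[_ hi]; have c0 := @cc_ge0 _ _ f i f0 hi.
rewrite mulrA; apply: ler_wpM2r => //.
have := D0 (Bs f i); rewrite le_eqVlt => /orP[/eqP <-|]; last exact: hND.
by rewrite mulr0.
Qed.

Lemma eq_level {R : realFieldType} {T : finType} (N D : {set T} -> R) v (f : T -> R) :
  (forall A, 0 <= N A) -> (forall A, 0 < D A -> v * D A <= N A) ->
  (forall A, 0 <= D A) -> (forall x, 0 <= f x) ->
  lovasz N f = v * lovasz D f -> lovasz D f != 0 ->
  exists x, 0 < D (level_set f x) /\ N (level_set f x) = v * D (level_set f x).
Proof.
move=> N0 hND D0 f0 heq hD.
have hterm : forall i, (i < size (ss f))%N ->
    0 <= N (Bs f i) * cc f i - v * (D (Bs f i) * cc f i).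
  move=> i hi; have c0 := @cc_ge0 _ _ f i f0 hi; rewrite subr_ge0 mulrA.
  apply: ler_wpM2r => //.
  have := D0 (Bs f i); rewrite le_eqVlt => /orP[/eqP <-|]; last exact: hND.
  by rewrite mulr0.
have hsum : \sum_(i < size (ss f)) (N (Bs f i) * cc f i - v * (D (Bs f i) * cc f i)) = 0.
  have eN : lovasz N f = \sum_(i < size (ss f)) N (Bs f i) * cc f i.
    by rewrite lovaszE big_mkord.
  have eD : lovasz D f = \sum_(i < size (ss f)) D (Bs f i) * cc f i.
    by rewrite lovaszE big_mkord.
  by rewrite sumrB -mulr_sumr -eN -eD heq subrr.
have hall := (@psumr_eq0P _ _ xpredT (fun i : 'I_(size (ss f)) => N (Bs f i) * cc f i - v * (D (Bs f i) * cc f i)) (fun i _ => hterm i (ltn_ord i))) hsum.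
have : ~~ [forall i : 'I_(size (ss f)), D (Bs f i) * cc f i == 0].
  apply/negP => /forallP H; move: hD; rewrite lovaszE big_mkord.
  by rewrite big1 ?eqxx // => i _; apply/eqP.
case/forallPn => i /= hi.
have c0 := @cc_ge0 _ _ f i f0 (ltn_ord i).
have cpos : 0 < cc f i.
  by rewrite lt_def c0 andbT; apply: contraNneq hi => ->; rewrite mulr0.
have Dpos : 0 < D (Bs f i).
  rewrite lt_def D0 andbT; apply: contraNneq hi => ->; rewrite mul0r.
  done.
have [x0 _] : exists x0 : T, True.
  have h : (0 < #|T|)%N by rewrite -(size_ss f); apply: leq_ltn_trans (ltn_ord i).
  by case/card_gt0P: h => x _; exists x.
exists (nth x0 (ss f) i); rewrite -(Bs_level f x0 i (ltn_ord i) cpos); split => //.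
have := hall i isT; move/eqP; rewrite subr_eq0 mulrA => /eqP.
by move/(mulIf (lt0r_neq0 cpos)).
Qed.

Lemma lovasz_ind {R : realFieldType} {T : finType} (F : {set T} -> R) (A : {set T}) :
  A != set0 -> lovasz F (fun x => if x \in A then 1 else 0) = F A.
Proof.
set f := fun x => _.
move=> /set0Pn [a ha].
have f0 : forall x, 0 <= f x by move=> x; rewrite /f; case: (x \in A).
have hn : (0 < size (ss f))%N by rewrite size_ss; apply/card_gt0P; exists a.
rewrite lovaszE.
transitivity (\sum_(0 <= i < size (ss f)) F A * cc f i).
  rewrite big_nat [RHS]big_nat; apply: eq_bigr => i /andP[_ hi].
  have := @cc_ge0 _ _ f i f0 hi; rewrite le_eqVlt => /orP[/eqP <-|cpos]; first by rewrite !mulr0.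
  rewrite (Bs_level f a i hi cpos); congr (F _ * _).
  have : 0 < f (nth a (ss f) i).
    move: cpos; rewrite /cc; case: i hi => [|i] hi.
      by rewrite subr0 (vvE f a 0).
    rewrite (vvE f a i.+1) // (vvE f a i) ?(ltnW hi) // => h.
    have := f0 (nth a (ss f) i); lra.
  rewrite /f; case: ifP => [hin _|]; last by rewrite ltxx.
  apply/setP => y; rewrite /level_set !inE hin.
  by case: ifP => _; rewrite ?lexx ?ler10.
rewrite -big_distrr /= -(prednK hn) cc_sum.
have h1 := vv_max f a.
have : vv f (size (ss f)).-1 <= 1.
  have hlt : ((size (ss f)).-1 < size (ss f))%N by rewrite ltn_predL.
  by rewrite (vvE f a _ hlt) /f; case: ifP => _; rewrite ?ler01.
move: h1; rewrite /f ha => h1 h2.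
have -> : vv f (size (ss f)).-1 = 1 by apply: le_anti; rewrite h2 h1.
by rewrite mulr1.
Qed.

Lemma dsum {R : realFieldType} {V : finType} (P Q : pred V) (F : V -> V -> R) :
  \sum_(i | P i) \sum_(j | Q j) F i j =
  \sum_(p : V * V) ((P p.1)%:R * (Q p.2)%:R) * F p.1 p.2.
Proof.
rewrite pair_big big_mkcond; apply: eq_bigr => p _.
by case: (P p.1); case: (Q p.2); rewrite /= ?mul1r ?mul0r.
Qed.

Lemma emb_notS {V : finType} {S : {set V}} (A : {set Vp S}) x :
  x \in emb A -> x \notin S.
Proof.
by case/imsetP => y _ ->; have := valP y; rewrite inE.
Qed.

Lemma assocS_bounds {R : realFieldType} {V : finType} (w : V -> V -> R)
  (hw_sym : forall i j, w i j = w j i) (hw_nn : forall i j, 0 <= w i j)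
  (S : {set V}) (A : {set Vp S}) :
  0 <= assocS w S A <= vol (degree w) setT.
Proof.
set E := emb A.
have hE : forall x, x \in E -> x \notin S := @emb_notS V S A.
set u := (unit_set A : R).
have hu : u = 0 \/ u = 1 by rewrite /u /unit_set; case: ifP; [left|right].
have sym : \sum_(i in E) \sum_(j in S) w i j = \sum_(i in S) \sum_(j in E) w i j.
  rewrite exchange_big; apply: eq_bigr => i _; apply: eq_bigr => j _; exact: hw_sym.
have e : assocS w S A = \sum_(p : V * V)
   (((p.1 \in E)%:R * (true : bool)%:R - (p.1 \in E)%:R * (p.2 \in (~: S) :\: E)%:R
     + (p.1 \in S)%:R * (p.2 \in E)%:R) + (p.1 \in S)%:R * (p.2 \in S)%:R * u) * w p.1 p.2.
  rewrite /assocS -/E /vol /degree /degS /cut /assoc -/u.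
  rewrite sym.
  rewrite (dsum (fun i => i \in E) xpredT) (dsum (fun i => i \in E) (fun j => j \in (~: S) :\: E)).
  rewrite (dsum (fun i => i \in S) (fun j => j \in E)) (dsum (fun i => i \in S) (fun j => j \in S)).
  rewrite mulr_suml -sumrB -!big_split /=; apply: eq_bigr => p _; ring.
rewrite e.
have hV : vol (degree w) setT = \sum_(p : V * V) w p.1 p.2.
  by rewrite /vol /degree pair_big /=; apply: eq_bigl => p; rewrite inE.
rewrite hV; apply/andP; split.
  apply: sumr_ge0 => p _; apply: mulr_ge0 => //.
  have h1 := hE p.1; have h2 := hE p.2; rewrite !inE.
  case: (p.1 \in E) h1; case: (p.2 \in E) h2; case: (p.1 \in S); case: (p.2 \in S);
    move=> //= h2 h1; try (have := h1 isT; done); try (have := h2 isT; done);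
    case: hu => ->; rewrite /=; lra.
apply: ler_sum => p _; rewrite -[X in _ <= X]mul1r; apply: ler_wpM2r => //.
have h1 := hE p.1; have h2 := hE p.2; rewrite !inE.
case: (p.1 \in E) h1; case: (p.2 \in E) h2; case: (p.1 \in S); case: (p.2 \in S);
  move=> //= h2 h1; try (have := h1 isT; done); try (have := h2 isT; done);
  case: hu => ->; rewrite /=; lra.
Qed.

Lemma max0_ge0 {R : realFieldType} (x : R) : 0 <= Num.max 0 x.
Proof. by rewrite le_max lexx. Qed.

Lemma max0_eq0 {R : realFieldType} (x : R) : x <= 0 -> Num.max 0 x = 0.
Proof. by move=> hx; rewrite max_l. Qed.

Lemma max0_eq0' {R : realFieldType} (x : R) : Num.max 0 x = 0 -> x <= 0.
Proof. by move=> h; rewrite -h le_max lexx orbT. Qed.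

Lemma pen_ge0 {R : realFieldType} {V : finType} {p : nat}
  (M : 'I_p -> V -> R) (k l : 'I_p -> R) (dist : V -> V -> R) (d0 : R)
  (S : {set V}) (A : {set Vp S}) : 0 <= pen M k l dist d0 S A.
Proof.
rewrite /pen; case: ifP => // _.
apply: addr_ge0; first apply: addr_ge0.
- by apply: sumr_ge0 => j _; apply: max0_ge0.
- by apply: sumr_ge0 => j _; apply: max0_ge0.
- by apply: sumr_ge0 => u _; apply: sumr_ge0 => v _; apply: max0_ge0.
Qed.

Lemma pen_feas {R : realFieldType} {V : finType} {p : nat}
  (M : 'I_p -> V -> R) (k l : 'I_p -> R) (dist : V -> V -> R) (d0 : R)
  (S : {set V}) (A : {set Vp S}) :
  feasible M k l dist d0 S A -> pen M k l dist d0 S A = 0.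
Proof.
case=> hA hkl hd; rewrite /pen (negbTE hA).
rewrite !big1 ?addr0 // => [u hu|j _|j _].
- by rewrite big1 // => v hv; apply: max0_eq0; rewrite subr_le0 hd.
- by apply: max0_eq0; rewrite subr_le0; case/andP: (hkl j).
- by apply: max0_eq0; rewrite subr_le0; case/andP: (hkl j).
Qed.

Lemma pen_pos {R : realFieldType} {V : finType} {p : nat}
  (M : 'I_p -> V -> R) (k l : 'I_p -> R) (dist : V -> V -> R) (d0 : R)
  (S : {set V}) (A : {set Vp S}) :
  A != set0 -> ~ feasible M k l dist d0 S A -> 0 < pen M k l dist d0 S A.
Proof.
move=> hA hnf; rewrite lt_def pen_ge0 andbT; apply/eqP => h0; apply: hnf.
move: h0; rewrite /pen (negbTE hA).
set s1 := \sum_(j < p) _; set s2 := \sum_(j < p) _; set s3 := \sum_(u in A) _.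
have h1 : 0 <= s1 by apply: sumr_ge0 => j _; apply: max0_ge0.
have h2 : 0 <= s2 by apply: sumr_ge0 => j _; apply: max0_ge0.
have h3 : 0 <= s3.
  by apply: sumr_ge0 => u _; apply: sumr_ge0 => v _; apply: max0_ge0.
move=> h.
have e1 : s1 = 0 by lra.
have e2 : s2 = 0 by lra.
have e3 : s3 = 0 by lra.
split => //.
- move=> j; apply/andP; split.
    rewrite -subr_le0; apply: max0_eq0'.
    exact: (psumr_eq0P (fun j _ => max0_ge0 _) e2).
  rewrite -subr_le0; apply: max0_eq0'.
  exact: (psumr_eq0P (fun j _ => max0_ge0 _) e1).
- move=> u v hu hv.
  have hu0 := psumr_eq0P (fun u _ => sumr_ge0 _ (fun v _ => max0_ge0 _)) e3 hu.
  rewrite -subr_le0; apply: max0_eq0'.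
  exact: (psumr_eq0P (fun v _ => max0_ge0 _) hu0 hv).
Qed.

Lemma vol_ge0 {R : realFieldType} {V : finType} (h : V -> R) (B : {set V}) :
  (forall i, 0 <= h i) -> 0 <= vol h B.
Proof. by move=> h0; apply: sumr_ge0. Qed.

Lemma vol_gt0 {R : realFieldType} {V : finType} (h : V -> R) (B : {set V}) :
  (forall i, 0 < h i) -> B != set0 -> 0 < vol h B.
Proof.
move=> h0 /set0Pn [x hx]; rewrite /vol (bigD1 x) //=.
have := h0 x; have : 0 <= \sum_(i in B | i != x) h i.
  by apply: sumr_ge0 => i _; apply: ltW.
lra.
Qed.

Lemma emb_neq0 {V : finType} {S : {set V}} (A : {set Vp S}) :
  A != set0 -> emb A != set0.
Proof.
case/set0Pn => x hx; apply/set0Pn; exists (val x); exact: imset_f.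
Qed.

Lemma assocS0 {R : realFieldType} {V : finType} (w : V -> V -> R) (S : {set V}) :
  assocS w S set0 = 0.
Proof.
by rewrite /assocS /emb imset0 /vol /cut /unit_set eqxx !big_set0 mulr0 subrr !addr0.
Qed.

Lemma unit_set1 {R : realFieldType} {T : finType} (A : {set T}) :
  A != set0 -> unit_set A = 1 :> R.
Proof. by rewrite /unit_set => /negbTE ->. Qed.

Definition feasibleb {R : realFieldType} {V : finType} {p : nat}
  (M : 'I_p -> V -> R) (k l : 'I_p -> R) (dist : V -> V -> R) (d0 : R)
  (S : {set V}) (A : {set Vp S}) : bool :=
  [&& A != set0, [forall j, k j <= vol (M j) (emb A) <= l j] &
      [forall u in A, forall v in A, dist (val u) (val v) <= d0]].

Lemma feasibleP {R : realFieldType} {V : finType} {p : nat}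
  (M : 'I_p -> V -> R) (k l : 'I_p -> R) (dist : V -> V -> R) (d0 : R)
  (S : {set V}) (A : {set Vp S}) :
  reflect (feasible M k l dist d0 S A) (feasibleb M k l dist d0 S A).
Proof.
apply: (iffP and3P) => [[h1 /forallP h2 h3]|[h1 h2 h3]]; split => //.
- move=> u v hu hv; move/forall_inP: h3 => /(_ u hu) /forall_inP; exact.
- by apply/forallP.
- by apply/forall_inP => u hu; apply/forall_inP => v hv; apply: h3.
Qed.

Lemma exists_max (R : realFieldType) (I : finType) (P : pred I) (F : I -> R) i0 :
  P i0 -> exists2 i, P i & forall j, P j -> F j <= F i.
Proof. move=> Pi0; case: (arg_maxP F Pi0) => i Pi H; by exists i. Qed.

Theorem mainTheorem4 (R : realFieldType) (V : finType)
  (w : V -> V -> R)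
  (hw_sym : forall i j, w i j = w j i) (hw_nn : forall i j, 0 <= w i j)
  (hw_diag : forall i, w i i = 0)
  (S : {set V}) (g : V -> R) (hg : forall i, 0 < g i)
  (p : nat) (M : 'I_p -> V -> R) (hM : forall j i, 0 <= M j i)
  (k l : 'I_p -> R)
  (dist : V -> V -> R) (hdist_sym : forall u v, dist u v = dist v u)
  (hdist_nn : forall u v, 0 <= dist u v) (hdist_diag : forall u, dist u u = 0)
  (d0 : R) (hd0 : 0 <= d0)
  (A0 : {set Vp S}) (hA0 : feasible M k l dist d0 S A0) (hA0pos : 0 < assocS w S A0)
  (theta : R)
  (htheta_att : exists A : {set Vp S},
      [/\ A != set0, ~ feasible M k l dist d0 S A & pen M k l dist d0 S A = theta])
  (htheta_min : forall A : {set Vp S}, A != set0 -> ~ feasible M k l dist d0 S A ->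
      theta <= pen M k l dist d0 S A)
  (gamma : R)
  (hgamma : vol (degree w) setT / theta * ((vol g (emb A0) + vol g S) / assocS w S A0)
            < gamma) :
  (exists fstar : Vp S -> R, cont_minimizer w g M k l dist d0 gamma S fstar)
  /\ (exists A : {set Vp S}, gdsp_optimal w g M k l dist d0 S A)
  /\ (forall fstar : Vp S -> R, cont_minimizer w g M k l dist d0 gamma S fstar ->
        forall A : {set Vp S}, gdsp_optimal w g M k l dist d0 S A ->
          cont_obj w g M k l dist d0 gamma S fstar = Some (gdsp_ratio w g S A)^-1)
  /\ (forall fstar : Vp S -> R, cont_minimizer w g M k l dist d0 gamma S fstar ->
        forall i : Vp S,
          (forall j : Vp S,
             ext_le (set_obj w g M k l dist d0 gamma S (level_set fstar i))
                    (set_obj w g M k l dist d0 gamma S (level_set fstar j))) ->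
          gdsp_optimal w g M k l dist d0 S (level_set fstar i)).
Proof.
set pn := pen M k l dist d0 S.
set D := assocS w S.
set volV := vol (degree w) setT.
set nu := vol g S.
set den := fun A : {set Vp S} => vol g (emb A) + nu.
set N := fun A : {set Vp S} => vol g (emb A) + nu * unit_set A + gamma * pn A.
have nu0 : 0 <= nu by apply: vol_ge0 => i; apply: ltW.
have D0 : forall A, 0 <= D A by move=> A; case/andP: (assocS_bounds w hw_sym hw_nn S A).
have DV : forall A, D A <= volV by move=> A; case/andP: (assocS_bounds w hw_sym hw_nn S A).
have Dne0 : forall A, 0 < D A -> A != set0.
  by move=> A; apply: contraTneq => ->; rewrite /D assocS0 ltxx.
have den0 : forall A, A != set0 -> 0 < den A.
  move=> A hA; have := @vol_gt0 _ _ g (emb A) hg (emb_neq0 A hA); rewrite /den; lra.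
have pn0 := pen_ge0 M k l dist d0 S.
have theta0 : 0 < theta.
  by case: htheta_att => A [hA hnf <-]; apply: pen_pos.
have volV0 : 0 <= volV by apply: le_trans (DV A0); apply: D0.
have hA0ne : A0 != set0 by case: hA0.
have r0pos : 0 < gdsp_ratio w g S A0 by rewrite /gdsp_ratio divr_gt0 // den0.
have gamma0 : 0 < gamma.
  apply: le_lt_trans hgamma; apply: mulr_ge0; first exact: divr_ge0 (ltW theta0).
  by apply: divr_ge0; [apply: ltW; apply: den0|apply: D0].
have [Astar hAs hmax] := @exists_max R _ _ (gdsp_ratio w g S) A0 (introT (feasibleP _ _ _ _ _ _ _) hA0).
have hAsF : feasible M k l dist d0 S Astar by apply/feasibleP.
have hmaxF : forall B, feasible M k l dist d0 S B -> gdsp_ratio w g S B <= gdsp_ratio w g S Astar.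
  by move=> B /feasibleP; apply: hmax.
set opt := gdsp_ratio w g S Astar.
have opt_pos : 0 < opt by apply: lt_le_trans r0pos (hmaxF _ hA0).
have hAsne : Astar != set0 by case: hAsF.
set v := opt^-1.
have v0 : 0 < v by rewrite invr_gt0.
have vopt : v * opt = 1 by rewrite mulVf // lt0r_neq0.
have Nfeas : forall A, feasible M k l dist d0 S A -> N A = den A.
  move=> A hF; rewrite /N /pn pen_feas // unit_set1 ?mulr1 ?mulr0 ?addr0 //; by case: hF.
have ratioE : forall A, A != set0 -> gdsp_ratio w g S A * den A = D A.
  by move=> A hA; rewrite /gdsp_ratio divfK // lt0r_neq0 // den0.
have hvA0 : v * D A0 <= den A0.
  rewrite -(ratioE _ hA0ne) mulrA; rewrite -[X in _ <= X]mul1r -vopt.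
  apply: ler_wpM2r; first exact: ltW (den0 _ hA0ne).
  by apply: ler_wpM2l; [apply: ltW | apply: hmaxF].
have hNDs : forall A, 0 < D A -> ~ feasible M k l dist d0 S A -> v * D A < N A.
  move=> A hDA hnF; have hA := Dne0 _ hDA.
  have D0pos : 0 < D A0 by [].
  have h1 : v * D A <= v * volV by apply: ler_wpM2l; [apply: ltW|apply: DV].
  have hv' : v <= den A0 / D A0 by rewrite ler_pdivlMr.
  have h2 : v * volV <= den A0 / D A0 * volV by apply: ler_wpM2r.
  have hg' : volV / theta * (den A0 / D A0) < gamma := hgamma.
  have h3 : den A0 / D A0 * volV < gamma * theta.
    by move: hg'; rewrite mulrAC ltr_pdivrMr // mulrC.
  have h4 : gamma * theta <= gamma * pn A.
    by apply: ler_wpM2l; [apply: ltW|apply: htheta_min].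
  have h5 : 0 <= vol g (emb A) by apply: vol_ge0 => i; apply: ltW.
  have h6 : 0 <= nu * unit_set A.
    by apply: mulr_ge0 => //; rewrite /unit_set; case: ifP.
  rewrite /N; lra.
have hND : forall A, 0 < D A -> v * D A <= N A.
  move=> A hDA; have hA := Dne0 _ hDA.
  case: (boolP (feasibleb M k l dist d0 S A)) => [/feasibleP hF|/feasibleP hnF].
    rewrite Nfeas // -(ratioE _ hA) mulrA -[X in _ <= X]mul1r -vopt.
    apply: ler_wpM2r; first exact: ltW (den0 _ hA).
    by apply: ler_wpM2l; [apply: ltW | apply: hmaxF].
  exact: ltW (hNDs _ hDA hnF).
have contE : forall h, cont_obj w g M k l dist d0 gamma S h = xdiv (lovasz N h) (lovasz D h).
  by move=> h; rewrite /cont_obj lovasz_lin.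
have setE : forall A, set_obj w g M k l dist d0 gamma S A = xdiv (N A) (D A) by [].
have N0 : forall A, 0 <= N A.
  move=> A; rewrite /N; apply: addr_ge0; first apply: addr_ge0.
  - by apply: vol_ge0 => i; apply: ltW.
  - by apply: mulr_ge0 => //; rewrite /unit_set; case: ifP.
  - by apply: mulr_ge0; [apply: ltW|apply: pn0].
have F5 : forall h, (forall x, 0 <= h x) ->
    ext_le (Some v) (cont_obj w g M k l dist d0 gamma S h).
  move=> h h0; rewrite contE /xdiv; case: ifP => // hD /=.
  have hLD : 0 < lovasz D h by rewrite lt_def hD lovasz_ge0.
  rewrite ler_pdivlMr //; exact: (ratio_lb N D v h N0 hND D0 h0).
set fs := fun x : Vp S => if x \in Astar then (1 : R) else 0.
have hDs : 0 < D Astar by rewrite -(ratioE _ hAsne) mulr_gt0 // den0.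
have contS : cont_obj w g M k l dist d0 gamma S fs = Some v.
  rewrite contE !lovasz_ind // /xdiv (negbTE (lt0r_neq0 hDs)) Nfeas //.
  by rewrite /v /opt /gdsp_ratio invf_div.
have fs0 : forall x, 0 <= fs x by move=> x; rewrite /fs; case: ifP.
have fsne : exists i, fs i != 0.
  case/set0Pn: hAsne => a ha; exists a; by rewrite /fs ha oner_neq0.
have cont_eq : forall f, cont_minimizer w g M k l dist d0 gamma S f ->
    cont_obj w g M k l dist d0 gamma S f = Some v.
  move=> f [f0 _ hmin]; have := hmin fs fs0 fsne; rewrite contS.
  have := F5 f f0; case: (cont_obj w g M k l dist d0 gamma S f) => [a|] //= h1 h2.
  by congr Some; apply: le_anti; rewrite h1 h2.
split.
  exists fs; split => // h h0 _; rewrite contS; exact: F5.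
split.
  by exists Astar; split.
split.
  move=> f hf A [hF hmaxA]; rewrite cont_eq //; congr Some.
  have -> // : gdsp_ratio w g S A = opt by apply: le_anti; rewrite hmaxA // hmaxF.
move=> f hf i hmin_i.
have hc := cont_eq f hf; have [f0 _ _] := hf.
rewrite contE /xdiv in hc; case: ifP hc => // hD [hv].
have hD' : lovasz D f != 0 by rewrite hD.
have heq : lovasz N f = v * lovasz D f by rewrite -hv divfK.
have [x [hDx hNx]] := eq_level N D v f N0 hND D0 f0 heq hD'.
have hsx : set_obj w g M k l dist d0 gamma S (level_set f x) = Some v.
  by rewrite setE /xdiv (negbTE (lt0r_neq0 hDx)) hNx mulfK // lt0r_neq0.
have := hmin_i x; rewrite hsx setE /xdiv; case: ifP => // hDi /= hle.
set L := level_set f i in hDi hle *.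
have hDL : 0 < D L by rewrite lt_def hDi D0.
have hNL : N L = v * D L.
  apply: le_anti; rewrite hND // andbT.
  by move: hle; rewrite ler_pdivrMr // mulrC.
have hLF : feasible M k l dist d0 S L.
  case: (boolP (feasibleb M k l dist d0 S L)) => [/feasibleP //|/feasibleP hnF].
  by have := hNDs _ hDL hnF; rewrite hNL ltxx.
have hLne : L != set0 by case: hLF.
have e1 : 1 * den L = (v * gdsp_ratio w g S L) * den L.
  by rewrite mul1r -mulrA ratioE // -Nfeas // hNL.
have e2 := mulIf (lt0r_neq0 (den0 _ hLne)) e1.
have e3 : gdsp_ratio w g S L = opt.
  by rewrite -(mulKf (lt0r_neq0 v0) (gdsp_ratio w g S L)) -e2 mulr1 /v invrK.
split => // B hB; rewrite e3; exact: hmaxF.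
Qed.
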